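(* Let $1\le k\le n$ and let $\mathcal{G}_{k-1}$ be a nearest-neighbor graph of a storage network with node set $\mathcal{N}$ and RTT function $\tau$. If $\mathcal{C}$ is a linear storage code that is admissible on $\mathcal{G}_{k-1}$, then for every node $i\in\mathcal{N}$, \[ L_{max}^{(i)}(\mathcal{C})=\lambda_{k-1}^{(i)}. \]
   Context: A storage network consists of $n$ nodes $\mathcal{N}=\{1,\dots,n\}$ and a round-trip-time (RTT) function $\tau:\mathcal{N}\times\mathcal{N}\to\mathbb{R}_{\ge 0}$ with $\tau(i,j)=\tau(j,i)$ and $\tau(i,i)=0$. There are $k\le n$ information files $W_1,\dots,W_k$, each consisting of $\alpha$ sub-packets in a finite field $\mathcal{F}$; node $i$ stores $X_i\in\mathcal{F}^\alpha$. A linear storage code $\mathcal{C}$ is given by a $(k\alpha\times n\alpha)$ matrix $G$ over $\mathcal{F}$ of rank $k\alpha$ with $\underline{X}^T=\underline{W}^T G$ (concatenated sub-packets). File $W_j$ is decodable from $S\subseteq\mathcal{N}$ if there is a function $\varphi$ with $\varphi((X_t)_{t\in S})=W_j$ for all choices of the files. The latency $l_j^{(i)}=\min\{L\ge 0: W_j$ decodable from $\{t:\tau(t,i)\le L\}\}$, and $L_{max}^{(i)}(\mathcal{C})=\max_{j\in[k]}l_j^{(i)}$. For node $i$, $\lambda_0^{(i)}\le\dots\le\lambda_{n-1}^{(i)}$ is the sorted list of $\{\tau(j,i):j\in\mathcal{N}\}$. A nearest-neighbor graph $\mathcal{G}_{k-1}$ is a directed graph on $\mathcal{N}$ in which each node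 $i$ has incoming edges from exactly $k-1$ other nodes whose RTTs to $i$ are the $k-1$ smallest values $\lambda_1^{(i)},\dots,\lambda_{k-1}^{(i)}$ (ties broken arbitrarily, so several such graphs may exist); these $k-1$ nodes are the neighbors of $i$. A code is admissible on a directed graph $\mathcal{D}$ on $\mathcal{N}$ if for every node $i$ and every $j\in[k]$, $W_j$ is decodable from $\{i\}$ together with the nodes having an edge into $i$ in $\mathcal{D}$. *)

(* Defs.v *)
From HB Require Import structures.
From mathcomp Require Import all_boot all_order all_algebra.
From mathcomp Require Import classical_sets reals.
Set Implicit Arguments. Unset Strict Implicit. Unset Printing Implicit Defensive.
Import Order.TTheory GRing.Theory Num.Theory.
Local Open Scope ring_scope.

(* The concatenated file vector W is a row vector of length k*alpha, sub-packet a
   of file j being entry (mxvec_index j a) = j*alpha + a; likewise X = W *m G,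
   node t storing entries t*alpha + a. *)

Section Code.
Variables (F : fieldType) (n k alpha : nat).

Definition file (W : 'rV[F]_(k * alpha)) (j : 'I_k) : 'rV[F]_alpha :=
  \row_(a < alpha) W 0 (mxvec_index j a).

Definition stored (G : 'M[F]_(k * alpha, n * alpha)) (W : 'rV[F]_(k * alpha))
  (t : 'I_n) : 'rV[F]_alpha :=
  \row_(a < alpha) (W *m G) 0 (mxvec_index t a).

Definition decodable (G : 'M[F]_(k * alpha, n * alpha)) (j : 'I_k) (S : {set 'I_n}) :=
  exists phi : ({t : 'I_n | t \in S} -> 'rV[F]_alpha) -> 'rV[F]_alpha,
    forall W : 'rV[F]_(k * alpha),
      phi (fun t => stored G W (val t)) = file W j.

(* A code is admissible on the directed graph whose in-neighbours of i are nbr i. *)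
Definition admissible (G : 'M[F]_(k * alpha, n * alpha)) (nbr : 'I_n -> {set 'I_n}) :=
  forall (i : 'I_n) (j : 'I_k), decodable G j (i |: nbr i).
End Code.

Section Latency.
Variables (R : realType) (n : nat) (tau : 'I_n -> 'I_n -> R).

(* lambda_m^(i): m-th element (from 0) of the sorted list of {tau(j,i) : j in N}. *)
Definition lambdas (i : 'I_n) : seq R := sort <=%R [seq tau t i | t <- enum 'I_n].
Definition lambda (i : 'I_n) (m : nat) : R := nth 0 (lambdas i) m.

Definition nn_graph (k : nat) (nbr : 'I_n -> {set 'I_n}) :=
  forall i : 'I_n,
    [/\ i \notin nbr i, #|nbr i| = k.-1 &
        sort <=%R [seq tau t i | t <- enum (nbr i)] = [seq lambda i m | m <- iota 1 k.-1]].

Variables (F : fieldType) (k alpha : nat).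

Definition latency (G : 'M[F]_(k * alpha, n * alpha)) (i : 'I_n) (j : 'I_k) : R :=
  inf [set L : R | 0 <= L /\ decodable G j [set t | tau t i <= L]].

Definition Lmax (G : 'M[F]_(k * alpha, n * alpha)) (i : 'I_n) : R :=
  \big[Num.max/0]_(j < k) latency G i j.
End Latency.

(* Main.v *)
Require Import Defs.
From HB Require Import structures.
From mathcomp Require Import all_boot all_order all_algebra.
From mathcomp Require Import classical_sets reals boolp zify.
Import Order.TTheory GRing.Theory Num.Theory.
Local Open Scope ring_scope.

Lemma decodable_sub (F : fieldType) n k alpha (G : 'M[F]_(k * alpha, n * alpha)) j
  (S S' : {set 'I_n}) : S \subset S' -> decodable G j S -> decodable G j S'.
Proof.
move=> /fintype.subsetP sS [phi Hphi].
exists (fun f => phi (fun t => f (exist _ (val t) (sS _ (valP t))))).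
exact: Hphi.
Qed.

Lemma not_all_decodable (F : finFieldType) n k alpha (G : 'M[F]_(k * alpha, n * alpha))
  (S : {set 'I_n}) : (0 < alpha)%N -> (#|S| < k)%N -> exists j, ~ decodable G j S.
Proof.
move=> ha hS; apply/not_existsP => /= H.
have dec j : decodable G j S by apply/not_notP; exact: H j.
pose ST := {t : 'I_n | t \in S}.
pose f (W : 'rV[F]_(k * alpha)) : {ffun ST -> 'rV[F]_alpha} :=
  [ffun t : ST => stored G W (val t)].
have inj_f : injective f.
  move=> W W' eqW; apply/rowP => x.
  have [j a] := mxvec_indexP x.
  have [phi Hphi] := dec j.
  have e : (fun t : ST => stored G W (val t)) = (fun t : ST => stored G W' (val t)).
    by apply: funext => t; move/ffunP: eqW => /(_ t); rewrite !ffunE.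
  have := Hphi W; rewrite e Hphi => /rowP /(_ a); rewrite !mxE.
  by [].
have := @leq_card _ _ f inj_f.
rewrite card_ffun !card_mx card_sig !mul1n.
have -> : #|[pred x | x \in S]| = #|S| by apply: eq_card.
rewrite -expnM.
have h1 := card_finNzRing_gt1 F.
rewrite leq_exp2l //.
rewrite mulnC leq_pmul2l // => H2; lia.
Qed.

Lemma card_countE (T : finType) (P : pred T) : #|[set t | P t]| = count P (enum T).
Proof. rewrite -size_filter cardE. apply: perm_size. apply: uniq_perm.
- exact: enum_uniq.
- exact/filter_uniq/enum_uniq.
- by move=> x; rewrite mem_enum mem_filter inE mem_enum andbT.
Qed.

Theorem proposition2 (R : realType) (F : finFieldType) (n k alpha : nat)
  (tau : 'I_n -> 'I_n -> R)
  (tau_sym : forall i j, tau i j = tau j i)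
  (tau_diag : forall i, tau i i = 0)
  (tau_ge0 : forall i j, 0 <= tau i j)
  (hk1 : (1 <= k)%N) (hkn : (k <= n)%N) (halpha : (0 < alpha)%N)
  (G : 'M[F]_(k * alpha, n * alpha)) (hG : \rank G = (k * alpha)%N)
  (nbr : 'I_n -> {set 'I_n}) (hnn : nn_graph tau k nbr)
  (hadm : admissible G nbr) :
  forall i : 'I_n, Lmax tau G i = lambda tau i k.-1.
Proof.
move=> i.
set s := lambdas tau i.
set lam := lambda tau i k.-1.
have sz : size s = n by rewrite size_sort size_map size_enum_ord.
have srt : sorted <=%R s by apply: sort_sorted; exact: le_total.
have km : (k.-1 < size s)%N by rewrite sz; lia.
have mono : forall a b, (a <= b < size s)%N -> nth 0 s a <= nth 0 s b.
  move=> a b /andP[ab bs].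
  apply: (sorted_leq_nth le_trans lexx) => //; rewrite inE //.
  exact: leq_ltn_trans ab bs.
have lam0 : 0 <= lam.
  have : lam \in s by exact: mem_nth.
  rewrite mem_sort => /mapP[t _ ->]; exact: tau_ge0.
have [nni cardn srtn] := hnn i.
have nbr_le : forall t, t \in i |: nbr i -> tau t i <= lam.
  move=> t; rewrite in_setU1 => /orP[/eqP -> | tn]; first by rewrite tau_diag.
  have : tau t i \in sort <=%R [seq tau t i | t <- enum (nbr i)].
    by rewrite mem_sort; apply: map_f; rewrite mem_enum.
  rewrite srtn => /mapP[m]; rewrite mem_iota => /andP[m1 m2] ->.
  apply: mono; apply/andP; split; [lia | exact: km].
have up : forall j, latency tau G i j <= lam.
  move=> j; apply: ge_inf.
  - by exists 0 => x [].
  - split => //; apply: decodable_sub (hadm i j).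
    by apply/fintype.subsetP => t /nbr_le; rewrite inE.
set S0 := [set t | tau t i < lam].
have cS0 : (#|S0| < k)%N.
  rewrite card_countE.
  have -> : count (fun t => tau t i < lam) (enum 'I_n) = count (fun x => x < lam) s.
    rewrite -(count_map (fun t => tau t i) (fun x => x < lam)).
    by rewrite /s /lambdas (permP (permEl (perm_sort _ _))).
  rewrite -(cat_take_drop k.-1 s) count_cat.
  have -> : count (fun x => x < lam) (drop k.-1 s) = 0%N.
    apply/eqP; rewrite -leqn0 leqNgt -has_count; apply/hasPn => x /(nthP 0)[m hm <-].
    rewrite size_drop in hm; rewrite nth_drop -leNgt; apply: mono; apply/andP; split; [exact: leq_addr | by rewrite -ltn_subRL].
  rewrite addn0; apply: leq_ltn_trans (count_size _ _) _.
  rewrite size_take km; lia.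
have [j nd] := @not_all_decodable _ _ _ _ G _ halpha cS0.
have low : lam <= latency tau G i j.
  apply: lb_le_inf.
  - exists lam; split => //; apply: decodable_sub (hadm i j).
    by apply/fintype.subsetP => t /nbr_le; rewrite inE.
  - move=> L [L0 dL]; rewrite leNgt; apply/negP => Llt; apply: nd.
    apply: decodable_sub dL; apply/fintype.subsetP => t; rewrite !inE => tL.
    exact: le_lt_trans tL Llt.
apply/le_anti/andP; split.
- by apply: bigmax_le => // j' _; exact: up.
- apply: le_trans low _.
  rewrite /Lmax (bigmaxD1 j) // le_max lexx //.
Qed.
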